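(* Let $G$ be any finite multiset of phase-free $n$-qubit Pauli strings and let $P\in\{I,X,Y,Z\}^n$ be any Pauli string. For $A\subseteq\operatorname{supp}(P)$ define $\mathcal{L}_P(A)=\{a:A\to\{X,Y,Z\}: a(j)\neq P_j\text{ for every }j\in A\}$, $D_G(A,a)=|\{Q\in G: A\subseteq\operatorname{supp}(Q)\text{ and }Q_j=a(j)\text{ for all }j\in A\}|$ (with multiplicity), and $F_G(P,A)=\sum_{a\in\mathcal{L}_P(A)}D_G(A,a)$. Let \[ Z_G(P)=\sum_{A\subseteq\operatorname{supp}(P)}(-2)^{|A|}F_G(P,A),\qquad \operatorname{anti}_G(P)=\frac{|G|-Z_G(P)}{2}. \] Then $\operatorname{anti}_G(P)$ equals the number of strings $Q\in G$ (counted with multiplicity) that anticommute with $P$, i.e. satisfy $PQ=-QP$ as $2^n\times 2^n$ matrices.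
   Context: A phase-free $n$-qubit Pauli string is a word $P=(P_1,\dots,P_n)\in\{I,X,Y,Z\}^n$ with $I$ the $2\times2$ identity, $X=\begin{pmatrix}0&1\\1&0\end{pmatrix}$, $Y=\begin{pmatrix}0&-i\\ i&0\end{pmatrix}$, $Z=\begin{pmatrix}1&0\\0&-1\end{pmatrix}$; it is identified with the matrix $P_1\otimes\cdots\otimes P_n$. Its support is $\operatorname{supp}(P)=\{j: P_j\neq I\}$. $|G|$ denotes the size of the multiset $G$ counted with multiplicity. *)

(* Defs.v *)
From HB Require Import structures.
From mathcomp Require Import all_boot all_order all_algebra all_field.
From mathcomp Require Import mxtens.
Set Implicit Arguments. Unset Strict Implicit. Unset Printing Implicit Defensive.
Import Order.TTheory GRing.Theory Num.Theory.
Local Open Scope ring_scope.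

Inductive pauli := PI | PX | PY | PZ.

Definition pauli_to (p : pauli) : 'I_4 :=
  match p with PI => inord 0 | PX => inord 1 | PY => inord 2 | PZ => inord 3 end.
Definition pauli_of (i : 'I_4) : pauli :=
  match val i with 0 => PI | 1 => PX | 2 => PY | _ => PZ end.
Lemma pauli_toK : cancel pauli_to pauli_of.
Proof. by case; rewrite /pauli_of /= inordK. Qed.
HB.instance Definition _ := Finite.copy pauli (can_type pauli_toK).

Definition pauli_mx (p : pauli) : 'M[algC]_2 :=
  \matrix_(i < 2, j < 2)
   match p with
   | PI => if i == j then 1 else 0
   | PX => if i == j then 0 else 1
   | PY => if i == j then 0 else (if val i == 0%N then - 'i else 'i)
   | PZ => if i == j then (if val i == 0%N then 1 else -1) else 0
   end.

Definition pstring (n : nat) := n.-tuple pauli.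

Fixpoint pstr_mx (n : nat) : n.-tuple pauli -> 'M[algC]_(2 ^ n) :=
  match n with
  | 0 => fun _ => 1%:M
  | m.+1 => fun t =>
      castmx (esym (expnS 2 m), esym (expnS 2 m))
             (pauli_mx (thead t) *t pstr_mx (behead_tuple t))
  end.

Definition supp n (P : pstring n) : {set 'I_n} := [set j | tnth P j != PI].

Definition anticommb n (P Q : pstring n) : bool :=
  pstr_mx P *m pstr_mx Q == - (pstr_mx Q *m pstr_mx P).

(* L_P(A): functions a : A -> {X,Y,Z} with a(j) != P_j, encoded as
   functions on 'I_n that are PI outside A. *)
Definition LP n (P : pstring n) (A : {set 'I_n}) : pred {ffun 'I_n -> pauli} :=
  fun a => [forall j, if j \in A then (a j != PI) && (a j != tnth P j)
                      else a j == PI].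

Definition DG n (G : seq (pstring n)) (A : {set 'I_n}) (a : {ffun 'I_n -> pauli}) : nat :=
  count (fun Q => (A \subset supp Q) && [forall j in A, tnth Q j == a j]) G.

Definition FG n (G : seq (pstring n)) (P : pstring n) (A : {set 'I_n}) : nat :=
  (\sum_(a | LP P A a) DG G A a)%N.

Definition ZG n (G : seq (pstring n)) (P : pstring n) : int :=
  \sum_(A : {set 'I_n} | A \subset supp P) (-2) ^+ #|A| * (FG G P A)%:Z.

Definition antiG n (G : seq (pstring n)) (P : pstring n) : rat :=
  ((size G)%:R - (ZG G P)%:~R) / 2.

(* Main.v *)
Require Import Defs.
From HB Require Import structures.
From mathcomp Require Import all_boot all_order all_algebra all_field.
From mathcomp Require Import mxtens.
From mathcomp Require Import ring.
Set Implicit Arguments. Unset Strict Implicit. Unset Printing Implicit Defensive.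
Import Order.TTheory GRing.Theory Num.Theory.
Local Open Scope ring_scope.

Definition bad (p q : pauli) : bool := [&& p != PI, q != PI & p != q].

Definition peqb (p q : pauli) : bool :=
  match p, q with PI, PI | PX, PX | PY, PY | PZ, PZ => true | _, _ => false end.
Lemma peqE p q : (p == q) = peqb p q.
Proof. by case: p; case: q; rewrite ?eqxx //; apply/eqP. Qed.

Lemma mulCii : 'i * 'i = -1 :> algC.
Proof. by rewrite -expr2 sqrCi. Qed.

Lemma pauli_sq (p : pauli) : pauli_mx p *m pauli_mx p = 1%:M.
Proof.
apply/matrixP => i j; rewrite !mxE !big_ord_recl !big_ord0 !mxE.
case: i => [[|[|//]] ?]; case: j => [[|[|//]] ?]; case: p => /=;
  rewrite ?(mulr0,mul0r,mulr1,mul1r,addr0,add0r,mulrN,mulNr,opprK,mulCii) //.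
Qed.

Lemma pauli_comm (p q : pauli) :
  pauli_mx p *m pauli_mx q = (-1) ^+ bad p q *: (pauli_mx q *m pauli_mx p).
Proof.
apply/matrixP => i j; rewrite !mxE !big_ord_recl !big_ord0 !mxE.
case: i => [[|[|//]] ?]; case: j => [[|[|//]] ?]; case: p; case: q; rewrite /bad !peqE /=;
  rewrite ?(expr0, expr1, scale1r, mulr0,mul0r,mulr1,mul1r,addr0,add0r,mulrN,mulNr,opprK,mulCii, oppr0) //.
Qed.

Lemma castmx_mulsq m m' (e : m = m') (A B : 'M[algC]_m) :
  castmx (e, e) (A *m B) = castmx (e, e) A *m castmx (e, e) B.
Proof. by case: m' / e. Qed.

Lemma castmxZ m n m' n' (e : (m = m') * (n = n')) (c : algC) (A : 'M[algC]_(m, n)) :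
  castmx e (c *: A) = c *: castmx e A.
Proof. by apply/matrixP => i j; rewrite !castmxE !mxE castmxE. Qed.

Lemma tensmxZl m n p q (c : algC) (A : 'M[algC]_(m, n)) (B : 'M[algC]_(p, q)) :
  (c *: A) *t B = c *: (A *t B).
Proof.
apply/matrixP => i j; case: (mxtens_indexP i) => i0 i1; case: (mxtens_indexP j) => j0 j1.
by rewrite (tensmxE (c *: A) B) [in RHS]mxE (tensmxE A B) mxE mulrA. Qed.

Lemma tensmxZr m n p q (c : algC) (A : 'M[algC]_(m, n)) (B : 'M[algC]_(p, q)) :
  A *t (c *: B) = c *: (A *t B).
Proof.
apply/matrixP => i j; case: (mxtens_indexP i) => i0 i1; case: (mxtens_indexP j) => j0 j1.
by rewrite (tensmxE A (c *: B)) [in RHS]mxE (tensmxE A B) mxE mulrCA. Qed.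

Lemma tens11 m n : (1%:M : 'M[algC]_m) *t (1%:M : 'M[algC]_n) = 1%:M.
Proof.
apply/matrixP => i j; case: (mxtens_indexP i) => i0 i1; case: (mxtens_indexP j) => j0 j1.
rewrite (tensmxE (1%:M : 'M[algC]_m)) !mxE (can_eq (@mxtens_indexK _ _)) xpair_eqE.
by case: (i0 == j0); case: (i1 == j1); rewrite /= ?mulr1 ?mulr0 ?mul0r.
Qed.

Definition Nbad n (P Q : pstring n) : nat := (\sum_(j < n) bad (tnth P j) (tnth Q j))%N.

Lemma NbadS n (P Q : pstring n.+1) :
  Nbad P Q = (bad (thead P) (thead Q) + Nbad (behead_tuple P) (behead_tuple Q))%N.
Proof.
rewrite /Nbad big_ord_recl; congr (_ + _)%N; apply: eq_bigr => j _.
by rewrite !(tnth_nth PI) /= !nth_behead /bump leq0n add1n. Qed.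

Lemma pstr_comm n (P Q : pstring n) :
  pstr_mx P *m pstr_mx Q = (-1) ^+ Nbad P Q *: (pstr_mx Q *m pstr_mx P).
Proof.
elim: n P Q => [|n IH] P Q /=.
  by rewrite /Nbad big_ord0 expr0 scale1r.
rewrite -!castmx_mulsq !tensmx_mul pauli_comm IH tensmxZl tensmxZr scalerA castmxZ.
by rewrite NbadS exprD.
Qed.

Lemma pstr_sq n (P : pstring n) : pstr_mx P *m pstr_mx P = 1%:M.
Proof.
elim: n P => [|n IH] P /=; first by rewrite mulmx1.
rewrite -castmx_mulsq tensmx_mul pauli_sq IH tens11.
by apply/matrixP => i j; rewrite castmxE !mxE.
Qed.

Lemma anticommE n (P Q : pstring n) : anticommb P Q = odd (Nbad P Q).
Proof.
rewrite /anticommb pstr_comm -signr_odd; case: (odd _) => /=.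
  by rewrite expr1 scaleN1r eqxx.
rewrite expr0 scale1r; apply/negbTE/negP => /eqP h.
have h0 : pstr_mx Q *m pstr_mx P = 0.
  apply/eqP; suff: (2%:R : algC) *: (pstr_mx Q *m pstr_mx P) == 0.
    by rewrite scaler_eq0 pnatr_eq0 orFb.
  by rewrite scaler_nat mulr2n addr_eq0 -h.
have : pstr_mx Q *m (pstr_mx Q *m pstr_mx P) *m pstr_mx P = 1%:M.
  by rewrite mulmxA pstr_sq mul1mx pstr_sq.
rewrite h0 mulmx0 mul0mx => h1.
have hn : (0 < 2 ^ n)%N by rewrite expn_gt0.
have := congr1 (fun M : 'M[algC]_(2 ^ n) => M (Ordinal hn) (Ordinal hn)) h1.
by rewrite /= !mxE eqxx /= => /eqP; rewrite eq_sym oner_eq0.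
Qed.

Definition Sset n (P Q : pstring n) : {set 'I_n} := [set j | bad (tnth P j) (tnth Q j)].

Lemma card_Sset n (P Q : pstring n) : #|Sset P Q| = Nbad P Q.
Proof.
rewrite /Nbad -sum1_card big_mkcond /=; apply: eq_bigr => j _.
by rewrite inE; case: bad.
Qed.

Lemma Sset_supp n (P Q : pstring n) : Sset P Q \subset supp P.
Proof. by apply/subsetP => j; rewrite !inE /bad => /and3P []. Qed.

Definition condQ n (Q : pstring n) (A : {set 'I_n}) (a : {ffun 'I_n -> pauli}) : bool :=
  (A \subset supp Q) && [forall j in A, tnth Q j == a j].

Lemma inner n (P Q : pstring n) (A : {set 'I_n}) : A \subset supp P ->
  (\sum_(a | LP P A a) condQ Q A a)%N = (A \subset Sset P Q).
Proof.
move=> sAP; case: (boolP (A \subset Sset P Q)) => sAS.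
  set a0 : {ffun 'I_n -> pauli} := [ffun j => if j \in A then tnth Q j else PI].
  have La0 : LP P A a0.
    apply/forallP => j; rewrite ffunE; case: ifP => jA; rewrite jA //.
    have := subsetP sAS j jA; rewrite inE /bad => /and3P [h1 h2 h3].
    by rewrite h2 eq_sym h3.
  rewrite (bigD1 a0 La0) /= big1 ?addn0.
    have -> : condQ Q A a0.
      apply/andP; split.
        apply/subsetP => j jA; have := subsetP sAS j jA.
        by rewrite !inE /bad => /and3P [].
      by apply/forallP => j; apply/implyP => jA; rewrite ffunE jA.
    by [].
  move=> a /andP [La neq]; apply/eqP; rewrite eqb0; apply/negP => /andP [_ /forallP h].
  apply: (negP neq); apply/eqP/ffunP => j; rewrite ffunE; case: ifP => jA.
    by have := h j; rewrite jA => /eqP ->.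
  by have := forallP La j; rewrite jA => /eqP.
rewrite big1 // => a La.
apply/eqP; rewrite eqb0; apply/negP => /andP [_ /forallP h].
apply: (negP sAS); apply/subsetP => j jA.
have := forallP La j; rewrite jA => /andP [a1 a2].
have := h j; rewrite jA => /eqP hq.
have := subsetP sAP j jA; rewrite !inE hq /bad => hP.
by rewrite hP a1 eq_sym a2.
Qed.

Lemma FG_cons n (G : seq (pstring n)) P Q (A : {set 'I_n}) : A \subset supp P ->
  FG (Q :: G) P A = ((A \subset Sset P Q) + FG G P A)%N.
Proof.
move=> sAP; rewrite /FG /DG /= big_split /=.
by rewrite -(inner Q sAP).
Qed.

Lemma FG_nil n (P : pstring n) (A : {set 'I_n}) : FG [::] P A = 0%N.
Proof. by rewrite /FG big1. Qed.

Lemma subset_sum n (S : {set 'I_n}) (x : int) :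
  \sum_(A : {set 'I_n} | A \subset S) x ^+ #|A| = (1 + x) ^+ #|S|.
Proof.
have h := @bigA_distr int 0 1 *%R +%R _
  (fun i : 'I_n => if i \in S then x else 0) (fun _ => 1).
transitivity (\prod_(i : 'I_n) ((if i \in S then x else 0) + 1)); last first.
  rewrite (eq_bigr (fun i => if i \in S then 1 + x else 1)); last first.
    by move=> i _; case: (i \in S); rewrite ?add0r // addrC.
  by rewrite -big_mkcond /= prodr_const.
rewrite h big_mkcond /=; apply: eq_bigr => J _.
case: (boolP (J \subset S)) => sJS.
  rewrite (eq_bigr (fun i => if i \in J then x else 1)); last first.
    by move=> i _; case: ifP => // iJ; rewrite (subsetP sJS i iJ).
  by rewrite -big_mkcond /= prodr_const.
have [i /andP [iJ iS]] : exists i, (i \in J) && (i \notin S).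
  apply/existsP; apply: contraR sJS; rewrite negb_exists => /forallP hh.
  apply/subsetP => i iJ; have := hh i; rewrite iJ /=; by rewrite negbK.
by rewrite (bigD1 i) //= iJ (negbTE iS) mul0r.
Qed.

Lemma ZG_nil n (P : pstring n) : ZG [::] P = 0.
Proof. by rewrite /ZG big1 // => A _; rewrite FG_nil mulr0. Qed.

Lemma ZG_cons n (G : seq (pstring n)) P Q :
  ZG (Q :: G) P = (-1) ^+ Nbad P Q + ZG G P.
Proof.
rewrite /ZG (eq_bigr (fun A : {set 'I_n} => (-2) ^+ #|A| * (A \subset Sset P Q)%:Z
                              + (-2) ^+ #|A| * (FG G P A)%:Z)); last first.
  by move=> A sA; rewrite FG_cons // PoszD mulrDr.
rewrite big_split /=; congr (_ + _).
have -> : (-1 : int) = 1 + (-2) by [].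
rewrite -card_Sset -subset_sum.
rewrite big_mkcond [RHS]big_mkcond; apply: eq_bigr => A _.
case: (boolP (A \subset Sset P Q)) => h.
  by rewrite (subset_trans h (Sset_supp P Q)) mulr1.
by rewrite mulr0; case: ifP.
Qed.

Theorem theorem1 (n : nat) (G : seq (pstring n)) (P : pstring n) :
  antiG G P = (count (anticommb P) G)%:R.
Proof.
elim: G => [|Q G IH]; first by rewrite /antiG ZG_nil /= subrr mul0r.
move: IH; rewrite /antiG /= ZG_cons anticommE natrD -addn1 natrD intrD -signr_odd.
move=> <-; rewrite -addn1 natrD.
set s := (size G)%:R; set z := (ZG G P)%:~R.
have h2 : (2%:R : rat) != 0 by [].
by case: (odd _); rewrite /= ?expr0 ?expr1 /=; field.
Qed.
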